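(* Let $R$ be a finite set of $n$ robots, with coordination space $\chi=\mathbb{R}^n$, obstacle region, dynamics, brake-safe set $B_G$ and control law $g^G$ as described in the context, and let $G$ be an acyclic directed graph on vertex set $R$. For each $i\in R$ let $\bar x_i:=\sup\{x_i: x\in\chi^{\mathrm{obs}}_{ij}\text{ for some } j\ne i\}$ (with $\bar x_i=-\infty$ if this set is empty). Then for every initial condition $s\in B_G$ there exists $T>0$ such that for all $i\in R$, $$\pi_{x,i}(\Phi(T,s,g^G))>\bar x_i.$$
   Context: Robots $i\in R$ move along fixed paths; $x_i\in\mathbb{R}$ is the curvilinear coordinate of robot $i$, $x=(x_i)_{i\in R}\in\chi:=\mathbb{R}^n$, and $\{\mathbf e_i\}$ is the canonical basis of $\chi$. For each unordered pair $\{i,j\}$, $\chi^{\mathrm{obs}}_{ij}\subset\chi$ (configurations where $i$ and $j$ collide) is an open cylinder of the form $C_{ij}+\mathrm{span}\{\mathbf e_k:k\ne i,j\}$ where $C_{ij}$ is an open bounded convex subset of $\mathrm{span}\{\mathbf e_i,\mathbf e_j\}$ (possibly empty); $\chi^{\mathrm{obs}}=\bigcup_{\{i,j\}}\chi^{\mathrm{obs}}_{ij}$. For $i\neq j$ define $\chi^{\mathrm{obs}}_{i\succ j}:=\chi^{\mathrm{obs}}_{ij}-\mathbb{R}_+\mathbf e_i+\mathbb{R}_+\mathbf e_j$ (Minkowski sum). A priority graph is a directed graph $G$ with vertex set $R$ and edge set $E(G)$; an edge $(i,j)$ means $i$ has priority over $j$. Set $\chi^{\mathrm{obs}}_G:=\bigcup_{(i,j)\in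 E(G)}\chi^{\mathrm{obs}}_{i\succ j}$, $\chi^{\mathrm{free}}_G:=\chi\setminus\chi^{\mathrm{obs}}_G$. Dynamics: robot $i$ has state $s_i=(x_i,v_i)\in S_i:=\mathbb{R}\times[0,\overline v_i]$ with speed limit $\overline v_i>0$, and $\dot x_i=v_i$, $\dot v_i=\mathbf u_i(t)\,\delta(\mathbf u_i(t),v_i(t))$, where $\delta(u,v)=0$ if ($v=0$ and $u<0$) or ($v=\overline v_i$ and $u>0$), and $\delta=1$ otherwise. Controls take values in $U_i=[\underline u_i,\overline u_i]$ with $\underline u_i<0<\overline u_i$ and are piecewise constant on each slot $[k,k+1)$, $k\in\mathbb{N}$; $\mathbf U_i$ is the set of such controls, $\mathbf U=\prod_i\mathbf U_i$, $S=\prod_i S_i$, $U=\prod_i U_i$. $\Phi_i(t,s_i,\mathbf u_i)$ is the resulting flow of robot $i$ from $s_i$, and $\Phi(t,s,\mathbf u)=(\Phi_i(t,s_i,\mathbf u_i))_i$. $\underline{\mathbf u}$ denotes the constant control equal to $(\underline u_i)_i$. $\pi_x(s)=x$, $\pi_{x,i}(s)=x_i$. Brake-safe states: $B_G:=\{s\in S:\ \pi_x(\Phi(t,s,\underline{\mathbf u}))\in\chi^{\mathrm{free}}_G\ \forall t\ge0\}$. Impulse control: $\mathbf u_i^{\mathrm{impulse}}(t)=\overline u_i$ for $t\in[0,1)$ and $=\underline u_i$ for $t\ge1$. Worst-case control w.r.t. $i$: $\tilde{\mathbf u}^i$ with $\tilde{\mathbf u}^i_i=\mathbf u_i^{\mathrm{impulse}}$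 and $\tilde{\mathbf u}^i_j$ the constant control $\underline u_j$ for $j\ne i$. Control law $g^G:S\to U$: $g^G_i(s)=\underline u_i$ if there exists $(j,i)\in E(G)$ and $t\ge0$ with $\pi_x(\Phi(t,s,\tilde{\mathbf u}^i))\in\chi^{\mathrm{obs}}_{j\succ i}$; otherwise $g^G_i(s)=\overline u_i$. For a feedback law $h:S\to U$, $\Phi(t,s,h)$ denotes $\Phi(t,s,\mathbf u)$ where $\mathbf u\in\mathbf U$ satisfies $\mathbf u(k)=h(\Phi(k,s,\mathbf u))$ for all $k\in\mathbb{N}$. *)

(* Defs.v *)
From Stdlib Require Import Reals Lra Relations ClassicalDescription.
From Coquelicot Require Import Coquelicot.
Open Scope R_scope.

(* Robots are indexed by natural numbers i < n.  A configuration x is a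
   function nat -> R (only coordinates i < n are meaningful). *)

(* C i j a b  <->  (x_i, x_j) = (a, b) lies in the open bounded convex set C_ij.
   chi^obs_ij = C_ij + span{e_k : k <> i,j} = { x | C i j (x i) (x j) }. *)
Definition open2 (P : R -> R -> Prop) : Prop :=
  forall a b, P a b -> exists eps, 0 < eps /\
    forall a' b', Rabs (a' - a) < eps -> Rabs (b' - b) < eps -> P a' b'.
Definition convex2 (P : R -> R -> Prop) : Prop :=
  forall a b a' b' l, 0 <= l <= 1 -> P a b -> P a' b' ->
    P (l * a + (1 - l) * a') (l * b + (1 - l) * b').
Definition bounded2 (P : R -> R -> Prop) : Prop :=
  exists M, forall a b, P a b -> Rabs a <= M /\ Rabs b <= M.

Definition obs (C : nat -> nat -> R -> R -> Prop) (i j : nat) (x : nat -> R) : Prop :=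
  C i j (x i) (x j).

(* chi^obs_{i > j} = chi^obs_ij - R_+ e_i + R_+ e_j :
   x in it  <->  exists a, b >= 0, x + a e_i - b e_j in chi^obs_ij *)
Definition obs_prio (C : nat -> nat -> R -> R -> Prop) (i j : nat) (x : nat -> R) : Prop :=
  exists a b, 0 <= a /\ 0 <= b /\ C i j (x i + a) (x j - b).

Definition obs_G (E : nat -> nat -> Prop) (C : nat -> nat -> R -> R -> Prop) (x : nat -> R) : Prop :=
  exists i j, E i j /\ obs_prio C i j x.

(* State s = (x, v). *)
Definition state := ((nat -> R) * (nat -> R))%type.
(* A control in U: robot i, slot k |-> value of u_i on [k, k+1). *)
Definition control := nat -> nat -> R.

(* Saturated velocity: solution of dv/dt = u * delta(u, v) started in [0, vb]
   with constant u is  v(tau) = max(0, min(vb, v0 + u tau)). *)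
Definition clampv (vb v : R) : R := Rmax 0 (Rmin vb v).
Definition vel_step (vb v0 u tau : R) : R := clampv vb (v0 + u * tau).
Definition pos_step (vb x0 v0 u tau : R) : R :=
  x0 + RInt (fun r => clampv vb (v0 + u * r)) 0 tau.

Definition step (vb : nat -> R) (s : state) (uk : nat -> R) (tau : R) : state :=
  (fun i => pos_step (vb i) (fst s i) (snd s i) (uk i) tau,
   fun i => vel_step (vb i) (snd s i) (uk i) tau).

Fixpoint state_at (vb : nat -> R) (s : state) (u : control) (k : nat) : state :=
  match k with
  | O => s
  | S k' => step vb (state_at vb s u k') (fun i => u i k') 1
  end.

Definition Phi (vb : nat -> R) (t : R) (s : state) (u : control) : state :=
  let k := Z.to_nat (Int_part t) in
  step vb (state_at vb s u k) (fun i => u i k) (t - IZR (Int_part t)).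

Definition brake (ulo : nat -> R) : control := fun i _ => ulo i.

Definition worst (ulo uhi : nat -> R) (i : nat) : control :=
  fun j k => if Nat.eqb j i then (if Nat.eqb k 0 then uhi i else ulo i) else ulo j.

Definition brake_safe (n : nat) (vb ulo : nat -> R) (E : nat -> nat -> Prop)
    (C : nat -> nat -> R -> R -> Prop) (s : state) : Prop :=
  (forall i, (i < n)%nat -> 0 <= snd s i <= vb i) /\
  forall t, 0 <= t -> ~ obs_G E C (fst (Phi vb t s (brake ulo))).

Definition gG (vb ulo uhi : nat -> R) (E : nat -> nat -> Prop)
    (C : nat -> nat -> R -> R -> Prop) (s : state) (i : nat) : R :=
  if excluded_middle_informative
       (exists j t, E j i /\ 0 <= t /\ obs_prio C j i (fst (Phi vb t s (worst ulo uhi i))))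
  then ulo i else uhi i.

(* Main.v *)
Require Import Defs.
From Stdlib Require Import Reals Lra Relations Classical ClassicalDescription ZArith Lia.
From Coquelicot Require Import Coquelicot.
Open Scope R_scope.

Lemma clamp_abs vb y : clampv vb y =
  ((vb + y - Rabs (vb - y)) / 2 + Rabs ((vb + y - Rabs (vb - y)) / 2)) / 2.
Proof.
  unfold clampv, Rmax, Rmin.
  destruct (Rle_dec vb y); destruct (Rle_dec 0 _);
  repeat (match goal with |- context [Rabs ?a] => destruct (Rabs_pos_lt a) as [] || 
     (destruct (Rcase_abs a); [rewrite (Rabs_left a) by lra | rewrite (Rabs_right a) by lra]) end); lra.
Qed.

Lemma clamp_cont vb v0 u x : continuous (fun r => clampv vb (v0 + u * r)) x.
Proof.
  apply continuity_pt_filterlim.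
  eapply continuity_pt_ext. { intro r; symmetry; apply clamp_abs. }
  repeat first [ apply continuity_pt_mult | apply continuity_pt_plus | apply continuity_pt_minus | apply continuity_pt_opp
    | apply continuity_pt_const; intros a b; reflexivity | apply continuity_pt_id
    | apply continuity_pt_div ; [ | | lra]
    | apply (continuity_pt_comp _ Rabs); [ | apply Rcontinuity_abs] ].
Qed.

Lemma RInt_clamp_ge0 vb v0 u tau : 0 <= tau ->
  0 <= RInt (fun r => clampv vb (v0 + u * r)) 0 tau.
Proof.
  intro H. apply RInt_ge_0; auto.
  - apply (ex_RInt_continuous (V:=R_CompleteNormedModule)). intros; apply clamp_cont.
  - intros; unfold clampv; apply Rmax_l.
Qed.

Lemma nat_arch r : exists m, r < INR m.
Proof.
  destruct (archimed r) as [H1 H2].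
  destruct (Z_lt_le_dec (up r) 0).
  - exists 0%nat. simpl. apply IZR_lt in l. lra.
  - exists (Z.to_nat (up r)). rewrite INR_IZR_INZ, Z2Nat.id by lia. lra.
Qed.

Section Dyn.
Variables (vb : nat -> R) (s : state) (u : control).
Notation X k i := (fst (state_at vb s u k) i).
Notation V k i := (snd (state_at vb s u k) i).

Lemma X_S k i : X (S k) i = X k i + RInt (fun r => clampv (vb i) (V k i + u i k * r)) 0 1.
Proof. reflexivity. Qed.
Lemma V_S k i : V (S k) i = clampv (vb i) (V k i + u i k * 1).
Proof. reflexivity. Qed.

Lemma X_mono k i : X k i <= X (S k) i.
Proof. rewrite X_S. pose proof (RInt_clamp_ge0 (vb i) (V k i) (u i k) 1). lra. Qed.

Lemma X_mono_le k k' i : (k <= k')%nat -> X k i <= X k' i.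
Proof.
  induction 1. lra. pose proof (X_mono m i). lra.
Qed.

Lemma Phi_X_ge t i : 0 <= t -> fst s i <= fst (Phi vb t s u) i.
Proof.
  intro Ht. unfold Phi. simpl. unfold pos_step.
  pose proof (X_mono_le 0 (Z.to_nat (Int_part t)) i (Nat.le_0_l _)). simpl in H.
  pose proof (base_Int_part t).
  pose proof (RInt_clamp_ge0 (vb i) (snd (state_at vb s u (Z.to_nat (Int_part t))) i)
     (u i (Z.to_nat (Int_part t))) (t - IZR (Int_part t))). lra.
Qed.

Lemma Phi_INR_X k i : fst (Phi vb (INR k) s u) i = X k i.
Proof.
  unfold Phi. rewrite Int_part_INR, Nat2Z.id. simpl. unfold pos_step.
  replace (INR k - IZR (Z.of_nat k)) with 0 by (rewrite <- INR_IZR_INZ; ring).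
  rewrite RInt_point. unfold zero; simpl. ring.
Qed.

Lemma live i k0 (c : R) : 0 < vb i -> (forall k, (k0 <= k)%nat -> u i k = c) -> 0 < c ->
  forall K, exists k, K < X k i.
Proof.
  intros Hvb Hu Hc K.
  assert (Vb : forall k, 0 <= V (S k) i <= vb i).
  { intro k. rewrite V_S. unfold clampv, Rmax, Rmin.
    destruct (Rle_dec _ _); destruct (Rle_dec _ _); lra. }
  assert (A : forall m, Rmin (vb i) (INR m * c) <= V (S k0 + m) i).
  { induction m.
    - rewrite Nat.add_0_r. change (INR 0) with 0. rewrite Rmult_0_l.
      pose proof (Vb k0). unfold Rmin. destruct (Rle_dec _ _); lra.
    - replace (S k0 + S m)%nat with (S (S k0 + m)) by lia.
      rewrite V_S, Hu by lia. rewrite S_INR.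
      pose proof (Vb (k0 + m)%nat). replace (S (k0 + m)) with (S k0 + m)%nat in H by lia.
      set (w := INR m * c) in *.
      replace ((INR m + 1) * c) with (w + c) by (unfold w; ring).
      revert IHm H. generalize (V (S k0 + m) i). intros v.
      unfold clampv, Rmax, Rmin.
      repeat (destruct (Rle_dec _ _)); lra. }
  destruct (nat_arch (vb i / c)) as [m Hm].
  assert (Hm' : vb i <= INR m * c).
  { apply Rmult_lt_compat_r with (r := c) in Hm; auto. unfold Rdiv in Hm.
    rewrite Rmult_assoc, Rinv_l, Rmult_1_r in Hm; lra. }
  set (k1 := (S k0 + m)%nat).
  assert (V1 : V k1 i = vb i).
  { pose proof (A m). pose proof (Vb (k0 + m)%nat). unfold k1. simpl in *.
    revert H. unfold Rmin. destruct (Rle_dec _ _); lra. }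
  assert (B : forall p, V (k1 + p) i = vb i /\ X (k1 + p) i = X k1 i + INR p * vb i).
  { induction p.
    - rewrite Nat.add_0_r. simpl. split; auto; ring.
    - destruct IHp as [IH1 IH2].
      rewrite Nat.add_succ_r, V_S, X_S, Hu by (unfold k1; lia). rewrite IH1, IH2, S_INR.
      assert (Hc1 : forall r, 0 <= r -> clampv (vb i) (vb i + c * r) = vb i).
      { intros r Hr. unfold clampv, Rmax, Rmin.
        assert (0 <= c * r) by nra. repeat destruct (Rle_dec _ _); lra. }
      split. { apply Hc1; lra. }
      rewrite (RInt_ext _ (fun _ => vb i)).
      + rewrite RInt_const. unfold scal; simpl; unfold mult; simpl. ring.
      + intros x Hx. rewrite Rmin_left in Hx by lra. apply Hc1. lra. }
  destruct (nat_arch ((K - X k1 i) / vb i)) as [p Hp].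
  exists (k1 + p)%nat. destruct (B p) as [_ ->].
  apply Rmult_lt_compat_r with (r := vb i) in Hp; auto. unfold Rdiv in Hp.
  rewrite Rmult_assoc, Rinv_l, Rmult_1_r in Hp; lra.
Qed.
End Dyn.

Lemma acyc_empty : forall n (E : nat -> nat -> Prop) (S : nat -> Prop),
  (forall i, ~ clos_trans nat E i i) -> (forall i, S i -> (i < n)%nat) ->
  (forall i, S i -> exists j, S j /\ E j i) -> forall i, ~ S i.
Proof.
  induction n; intros E S Hac Hn Hp i Hi.
  - specialize (Hn i Hi). lia.
  - set (E' := fun j i => E j i \/ (E j n /\ E n i)).
    set (S' := fun i => S i /\ i <> n).
    assert (Hsub : forall a b, clos_trans nat E' a b -> clos_trans nat E a b).
    { induction 1 as [a b [H|[H1 H2]] | a b c _ IH1 _ IH2].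
      - now apply t_step.
      - eapply t_trans; apply t_step; eauto.
      - eapply t_trans; eauto. }
    assert (HS' : forall i, ~ S' i).
    { apply (IHn E').
      - intros k Hk. apply (Hac k), Hsub, Hk.
      - intros k [Hk1 Hk2]. specialize (Hn k Hk1). lia.
      - intros k [Hk1 Hk2]. destruct (Hp k Hk1) as [p [Hp1 Hp2]].
        destruct (Nat.eq_dec p n) as [->|Hpn].
        + destruct (Hp n Hp1) as [q [Hq1 Hq2]].
          destruct (Nat.eq_dec q n) as [->|Hqn].
          * exfalso. apply (Hac n). now apply t_step.
          * exists q. split. split; auto. right; auto.
        + exists p. split. split; auto. left; auto. }
    destruct (Nat.eq_dec i n) as [->|Hin].
    + destruct (Hp n Hi) as [p [Hp1 Hp2]].
      destruct (Nat.eq_dec p n) as [->|Hpn].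
      * apply (Hac n). now apply t_step.
      * apply (HS' p). split; auto.
    + apply (HS' i). split; auto.
Qed.

Theorem theorem3
  (n : nat) (vb ulo uhi : nat -> R)
  (C : nat -> nat -> R -> R -> Prop) (E : nat -> nat -> Prop)
  (Hvb : forall i, (i < n)%nat -> 0 < vb i)
  (Hu : forall i, (i < n)%nat -> ulo i < 0 < uhi i)
  (HC : forall i j, (i < n)%nat -> (j < n)%nat -> i <> j ->
          open2 (C i j) /\ convex2 (C i j) /\ bounded2 (C i j))
  (Hsym : forall i j a b, (i < n)%nat -> (j < n)%nat -> (C i j a b <-> C j i b a))
  (HE : forall i j, E i j -> (i < n)%nat /\ (j < n)%nat)
  (Hacyc : forall i, ~ clos_trans nat E i i)
  (s : state) (Hs : brake_safe n vb ulo E C s)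
  (u : control)
  (Hfb : forall i k, (i < n)%nat ->
           u i k = gG vb ulo uhi E C (Phi vb (INR k) s u) i) :
  exists T, 0 < T /\
    forall i, (i < n)%nat ->
      exists M, M < fst (Phi vb T s u) i /\
        forall j a b, (j < n)%nat -> j <> i -> C i j a b -> a <= M.
Proof.
  set (Xk := fun k i => fst (state_at vb s u k) i).
  set (Good := fun i => forall K, exists k, K < Xk k i).
  assert (Hnl : forall j i, E j i -> j <> i).
  { intros j i H ->. apply (Hacyc i). now apply t_step. }
  assert (Step : forall i, (i < n)%nat -> (forall j, E j i -> Good j) -> Good i).
  { intros i Hi HG.
    assert (K0 : forall m, exists k0, forall j, (j < m)%nat -> E j i ->
               forall a b, C j i a b -> a < Xk k0 j).
    { induction m.
      - exists 0%nat. intros; lia.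
      - destruct IHm as [k1 Hk1].
        destruct (classic (E m i)) as [Hm|Hm].
        + destruct (HE _ _ Hm) as [Hmn _].
          destruct (HC m i Hmn Hi (Hnl _ _ Hm)) as [_ [_ [Mb HMb]]].
          destruct (HG m Hm Mb) as [k2 Hk2].
          exists (Nat.max k1 k2). intros j Hj Hji a b Hab.
          destruct (Nat.eq_dec j m) as [->|Hjm].
          * pose proof (X_mono_le vb s u k2 (Nat.max k1 k2) m (Nat.le_max_r _ _)).
            destruct (HMb a b Hab). unfold Xk in *.
            pose proof (Rle_abs a). lra.
          * pose proof (X_mono_le vb s u k1 (Nat.max k1 k2) j (Nat.le_max_l _ _)).
            specialize (Hk1 j ltac:(lia) Hji a b Hab). unfold Xk in *. lra.
        + exists k1. intros j Hj Hji a b Hab.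
          destruct (Nat.eq_dec j m) as [->|Hjm]; [contradiction|].
          apply (Hk1 j ltac:(lia) Hji a b Hab). }
    destruct (K0 n) as [k0 Hk0].
    destruct (Hu i Hi) as [_ Hup].
    intro KK; apply (live vb s u i k0 (uhi i) (Hvb i Hi)); auto.
    intros k Hk. rewrite (Hfb i k Hi). unfold gG.
    destruct (excluded_middle_informative _) as [Hex|]; [exfalso|reflexivity].
    destruct Hex as [j [t [Hji [Ht [a [b [Ha [Hb Hab]]]]]]]].
    destruct (HE _ _ Hji) as [Hjn _].
    pose proof (Hk0 j Hjn Hji _ _ Hab).
    pose proof (Phi_X_ge vb (Phi vb (INR k) s u) (worst ulo uhi i) t j Ht).
    rewrite Phi_INR_X in H0.
    pose proof (X_mono_le vb s u k0 k j Hk). unfold Xk in *. lra. }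
  assert (AllGood : forall i, (i < n)%nat -> Good i).
  { intros i Hi. apply NNPP. intro Hng.
    apply (acyc_empty n E (fun i => (i < n)%nat /\ ~ Good i) Hacyc) with i; auto.
    - intros k [Hk _]; auto.
    - intros k [Hk Hgk]. apply NNPP. intro Hno. apply Hgk, Step; auto.
      intros j Hj. apply NNPP. intro Hgj. apply Hno. exists j.
      destruct (HE _ _ Hj). auto. }
  assert (Fin : forall m, exists k, forall i, (i < m)%nat -> (i < n)%nat ->
     exists M, M < Xk k i /\ forall j a b, (j < n)%nat -> j <> i -> C i j a b -> a <= M).
  { induction m.
    - exists 0%nat. intros; lia.
    - destruct IHm as [k1 Hk1].
      destruct (lt_dec m n) as [Hmn|Hmn].
      + assert (HB : forall p, exists M, forall j a b, (j < p)%nat -> (j < n)%nat -> j <> m ->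
                   C m j a b -> a <= M).
        { induction p.
          - exists 0. intros; lia.
          - destruct IHp as [M1 HM1].
            destruct (lt_dec p n) as [Hpn|Hpn]; [destruct (Nat.eq_dec p m) as [Hpm|Hpm]|].
            + exists M1. intros j a b Hj Hjn Hjm Hab. apply (HM1 j a b); auto.
              assert (j <> p) by congruence. lia.
            + destruct (HC m p Hmn Hpn (not_eq_sym Hpm)) as [_ [_ [Mb HMb]]].
              exists (Rmax M1 Mb). intros j a b Hj Hjn Hjm Hab.
              destruct (Nat.eq_dec j p) as [->|Hjp].
              * destruct (HMb a b Hab). pose proof (Rle_abs a).
                pose proof (Rmax_r M1 Mb). lra.
              * pose proof (HM1 j a b ltac:(lia) Hjn Hjm Hab). pose proof (Rmax_l M1 Mb). lra.
            + exists M1. intros j a b Hj Hjn Hjm Hab. apply (HM1 j a b); auto. lia. }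
        destruct (HB n) as [Mm HMm].
        destruct (AllGood m Hmn Mm) as [k2 Hk2].
        exists (Nat.max k1 k2). intros i Hi Hin.
        destruct (Nat.eq_dec i m) as [->|Him].
        * exists Mm. split.
          -- pose proof (X_mono_le vb s u k2 (Nat.max k1 k2) m (Nat.le_max_r _ _)). unfold Xk in *. lra.
          -- intros j a b Hj Hjm Hab. apply (HMm j a b); auto.
        * destruct (Hk1 i ltac:(lia) Hin) as [M [HM1 HM2]]. exists M. split; auto.
          pose proof (X_mono_le vb s u k1 (Nat.max k1 k2) i (Nat.le_max_l _ _)). unfold Xk in *. lra.
      + exists k1. intros i Hi Hin. apply Hk1; auto. lia. }
  destruct (Fin n) as [k Hk].
  exists (INR (S k)). split. { apply lt_0_INR. lia. }
  intros i Hi. destruct (Hk i Hi Hi) as [M [HM1 HM2]]. exists M. split; auto.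
  rewrite Phi_INR_X. pose proof (X_mono vb s u k i). unfold Xk in *. lra.
Qed.
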